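(* Let $k\geq 2$ and $\ell\geq 2$ be integers. Let $G(k,\ell)$ be the graph obtained from the disjoint union of $\ell$ copies $K(1),\dots,K(\ell)$ of $K_{2k}$, where the vertex set of each $K(i)$ is partitioned into two sets $L(i)$ and $R(i)$ of size $k$, by adding, for every $i\in\{1,\dots,\ell\}$ (indices modulo $\ell$), a perfect matching $M(i)$ between $R(i)$ and $L(i+1)$. Let $G'(k,\ell)$ be obtained from $G(k,\ell)$ by adding, for every $i$ (indices modulo $\ell$), a further perfect matching between $R(i)$ and $L(i+1)$ that is edge-disjoint from $M(i)$. Then $G(k,\ell)$ is a connected $2k$-regular graph and $G'(k,\ell)$ is a connected $(2k+1)$-regular graph, and both satisfy $2\alpha=\mathrm{diss}$, i.e. $2\alpha(G(k,\ell))=\mathrm{diss}(G(k,\ell))=2\ell$ and $2\alpha(G'(k,\ell))=\mathrm{diss}(G'(k,\ell))=2\ell$.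
   Context: All graphs are finite, simple and undirected. $\alpha(G)$ is the independence number. A set $D$ of vertices is a dissociation set if the induced subgraph $G[D]$ has maximum degree at most $1$; $\mathrm{diss}(G)$ is the maximum order of a dissociation set. *)

(* Defs.v *)
From mathcomp Require Import all_boot all_fingroup.
Set Implicit Arguments. Unset Strict Implicit. Unset Printing Implicit Defensive.

Section GraphNotions.
Variable T : finType.
Variable e : rel T.

Definition simple_graph := irreflexive e /\ symmetric e.

Definition regular (d : nat) := forall v : T, #|[set w | e v w]| = d.

Definition connected_graph := forall u v : T, connect e u v.

Definition independent (S : {set T}) :=
  [forall x in S, forall y in S, ~~ e x y].

Definition dissociation (D : {set T}) :=
  [forall x in D, #|[set y in D | e x y]| <= 1].

Definition alpha := \max_(S : {set T} | independent S) #|S|.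
Definition diss := \max_(D : {set T} | dissociation D) #|D|.
End GraphNotions.

(* Vertices of G(k,l): (i, (s, j)) = j-th vertex of L(i) (s = false)
   or of R(i) (s = true) in the i-th copy K(i) of K_{2k}. *)
Definition gvert (l k : nat) := ('I_l * (bool * 'I_k))%type.

(* Perfect matching between R(i) and L(i+1) (indices mod l) given by
   a bijection sigma i : R(i) -> L(i+1). *)
Definition matchE (l k : nat) (sigma : 'I_l -> {perm 'I_k}) (x y : gvert l k) :=
  [&& x.2.1, ~~ y.2.1, y.1 == ordS x.1 & y.2.2 == sigma x.1 x.2.2].

Definition Gedge (l k : nat) (sigma : 'I_l -> {perm 'I_k}) : rel (gvert l k) :=
  fun x y => [|| (x.1 == y.1) && (x != y), matchE sigma x y | matchE sigma y x].

Definition G'edge (l k : nat) (sigma tau : 'I_l -> {perm 'I_k}) : rel (gvert l k) :=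
  fun x y => [|| Gedge sigma x y, matchE tau x y | matchE tau y x].

(* Main.v *)
Require Import Defs.
From mathcomp Require Import all_boot all_fingroup zify.
Set Implicit Arguments. Unset Strict Implicit. Unset Printing Implicit Defensive.

Section Generic.
Variables (k l : nat) (hk : 2 <= k) (hl : 2 <= l).
Variable e : rel (gvert l k).
Hypothesis Hirr : irreflexive e.
Hypothesis Hclq : forall x y : gvert l k, x.1 == y.1 -> x != y -> e x y.
Hypothesis Hcross : forall x y : gvert l k, e x y -> ~~ x.2.1 -> ~~ y.2.1 -> x.1 == y.1.

Lemma alpha_eq : alpha e = l.
Proof.
apply/eqP; rewrite eqn_leq; apply/andP; split.
- apply/bigmax_leqP => S /forallP HS.
  have inj : {in S &, injective (fun x : gvert l k => x.1)}.
    move=> x y xS yS /eqP exy; apply/eqP; apply/negPn/negP => nxy.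
    have := HS x; rewrite xS /= => /forallP /(_ y).
    by rewrite yS /= (Hclq exy nxy).
  rewrite -(card_in_imset inj) -[X in _ <= X]card_ord; exact: max_card.
- pose j0 : 'I_k := Ordinal (leq_trans (isT : 0 < 2) hk).
  pose f := fun i : 'I_l => ((i, (false, j0)) : gvert l k).
  have finj : injective f by move=> a b [].
  apply: (@leq_trans #|f @: setT|); first by rewrite card_imset // cardsT card_ord.
  apply: leq_bigmax_cond.
  apply/forallP => x; apply/implyP => /imsetP [a _ ->].
  apply/forallP => y; apply/implyP => /imsetP [b _ ->].
  apply/negP => H; have /eqP eab := Hcross H isT isT.
  simpl in eab; subst b; by rewrite Hirr in H.
Qed.

Lemma diss_eq : diss e = 2 * l.
Proof.
apply/eqP; rewrite eqn_leq; apply/andP; split.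
- apply/bigmax_leqP => D /forallP HD.
  rewrite -sum1_card (partition_big (fun x : gvert l k => x.1) predT) //=.
  have Hfib : forall i : 'I_l, \sum_(x | (x \in D) && (x.1 == i)) 1 <= 2.
    move=> i; rewrite sum1dep_card.
    set Di := [set x | _].
    case: (set_0Vmem Di) => [-> | [x xDi]]; first by rewrite cards0.
    rewrite (cardsD1 x) xDi add1n ltnS.
    move: xDi; rewrite inE => /andP [xD /eqP xi].
    have := HD x; rewrite xD /= => H1.
    apply: leq_trans H1; apply: subset_leq_card; apply/subsetP => y.
    rewrite !inE => /andP [yx /andP [yD /eqP yi]].
    rewrite yD /=; apply: Hclq; first by rewrite xi yi.
    by rewrite eq_sym.
  apply: (@leq_trans (\sum_(j < l) 2)); first by apply: leq_sum => i _; exact: Hfib.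
  by rewrite sum_nat_const card_ord mulnC.
- pose f := fun p : 'I_l * 'I_2 => ((p.1, (false, widen_ord hk p.2)) : gvert l k).
  have finj : injective f.
    move=> [a b] [c d] /= [-> h]; congr pair; exact: val_inj.
  apply: (@leq_trans #|f @: setT|); first by rewrite card_imset // cardsT card_prod !card_ord mulnC.
  apply: leq_bigmax_cond.
  apply/forallP => x; apply/implyP => /imsetP [[a b] _ ->].
  apply/card_le1_eqP => y z.
  rewrite !inE => /andP [/imsetP [[c d] _ ->] e1] /andP [/imsetP [[c' d'] _ ->] e2].
  have /eqP ec := Hcross e1 isT isT; have /eqP ec' := Hcross e2 isT isT.
  simpl in ec, ec'; subst c c'.
  have n1 : d != b.
    apply/eqP => db; subst d; by rewrite Hirr in e1.
  have n2 : d' != b.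
    apply/eqP => db; subst d'; by rewrite Hirr in e2.
  suff -> : d = d' by [].
  apply/val_inj; move: n1 n2; rewrite -!(inj_eq val_inj) /=.
  have := ltn_ord b; have := ltn_ord d; have := ltn_ord d'; lia.
Qed.

Hypothesis Hsym : symmetric e.
Variable sigma : 'I_l -> {perm 'I_k}.
Hypothesis Hstep : forall (i : 'I_l) (j : 'I_k), e (i, (true, j)) (ordS i, (false, sigma i j)).

Lemma intra (i : 'I_l) a b : connect e (i, a) (i, b).
Proof.
case: (eqVneq a b) => [-> | ab]; first exact: connect0.
apply: connect1; apply: Hclq => //=.
by rewrite xpair_eqE eqxx.
Qed.

Lemma conn : connected_graph e.
Proof.
have l0 : 0 < l by apply: leq_trans hl.
pose o : 'I_l := Ordinal l0.
pose j0 : 'I_k := Ordinal (leq_trans (isT : 0 < 2) hk).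
pose a0 := (true, j0).
have step : forall (i : 'I_l) a b, connect e (i, a) (ordS i, b).
  move=> i a b; apply: connect_trans (intra i a a0) _.
  apply: connect_trans (connect1 (Hstep i j0)) _; exact: intra.
have ind : forall n (h : n < l), connect e (o, a0) (Ordinal h, a0).
  elim=> [|n IH] h.
    by have -> : Ordinal h = o by apply: val_inj.
  have h' : n < l by apply: ltnW.
  apply: connect_trans (IH h') _.
  have -> : Ordinal h = ordS (Ordinal h') by apply: val_inj; rewrite /= modn_small.
  exact: step.
have base : forall u, connect e (o, a0) u.
  move=> [i a]; apply: connect_trans (intra i a0 a).
  by have := ind _ (ltn_ord i); have -> : Ordinal (ltn_ord i) = i by apply: val_inj.
move=> u v; apply: connect_trans (base v).
by rewrite (sym_connect_sym Hsym).
Qed.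
End Generic.

Section Specific.
Variables (k l : nat) (hk : 2 <= k) (hl : 2 <= l).

Lemma ordS_neq (i : 'I_l) : ordS i != i.
Proof.
rewrite -(inj_eq val_inj) /=; case: i => i hi /=.
have [lt|ge] := ltnP i.+1 l.
  by rewrite modn_small // (gtn_eqF (ltnSn i)).
have -> : i.+1 = l by apply/eqP; rewrite eqn_leq ge hi.
rewrite modnn; apply/eqP; lia.
Qed.

Lemma ord_pred_neq (i : 'I_l) : ord_pred i != i.
Proof.
apply/eqP => h; have := ordS_neq (ord_pred i); by rewrite ord_predK h eqxx.
Qed.

Definition nb (s : 'I_l -> {perm 'I_k}) (v : gvert l k) : gvert l k :=
  if v.2.1 then (ordS v.1, (false, s v.1 v.2.2))
  else (ord_pred v.1, (true, ((s (ord_pred v.1))^-1)%g v.2.2)).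

Lemma matchE_nb s v w : matchE s v w || matchE s w v = (w == nb s v).
Proof.
case: v => i [[] j]; case: w => i' [[] j']; rewrite /matchE /nb /= ?andbF ?orbF //=;
  rewrite !xpair_eqE /= ?andbF //.
have -> : (i == ordS i') = (i' == ord_pred i).
  by apply/eqP/eqP => ->; rewrite ?ordSK ?ord_predK.
case: eqP => [-> | ] //=.
by apply/eqP/eqP => ->; rewrite ?permK ?permKV.
Qed.

Lemma nb_fst s v : (nb s v).1 != v.1.
Proof. by rewrite /nb; case: ifP => _ /=; rewrite ?ordS_neq ?ord_pred_neq. Qed.

Definition C (v : gvert l k) := [set w : gvert l k | w.1 == v.1].

Lemma card_C v : #|C v :\ v| = (2 * k).-1.
Proof.
have h : #|C v| = 2 * k.
  have -> : C v = (fun p => (v.1, p) : gvert l k) @: setT.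
    apply/setP => w; rewrite inE; apply/eqP/imsetP => [<- | [p _ ->]] //.
    by exists w.2 => //; case: w.
  by rewrite card_imset ?cardsT ?card_prod ?card_bool ?card_ord // => p q [].
move: h; rewrite (cardsD1 v) {1}/C inE eqxx add1n => <-; by [].
Qed.

Lemma Gset s v : [set w | Gedge s v w] = nb s v |: (C v :\ v).
Proof.
apply/setP => w; rewrite !inE /Gedge matchE_nb orbC; congr orb.
by rewrite andbC eq_sym (eq_sym v.1).
Qed.

Lemma G'set s t v : [set w | G'edge s t v w] = nb t v |: (nb s v |: (C v :\ v)).
Proof.
apply/setP => w; have /setP/(_ w) := Gset s v; rewrite !inE /G'edge matchE_nb => ->.
by rewrite orbC.
Qed.

Lemma nb_notin s v : nb s v \notin C v :\ v.
Proof. by rewrite !inE negb_and (negbTE (nb_fst s v)) orbT. Qed.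

End Specific.

Theorem mainTheorem8 (k l : nat) (hk : 2 <= k) (hl : 2 <= l)
  (sigma tau : 'I_l -> {perm 'I_k})
  (hdisj : forall (i : 'I_l) (j : 'I_k), tau i j != sigma i j) :
  [/\ simple_graph (Gedge sigma), regular (Gedge sigma) (2 * k),
      connected_graph (Gedge sigma),
      2 * alpha (Gedge sigma) = diss (Gedge sigma) & diss (Gedge sigma) = 2 * l]
  /\
  [/\ simple_graph (G'edge sigma tau), regular (G'edge sigma tau) (2 * k + 1),
      connected_graph (G'edge sigma tau),
      2 * alpha (G'edge sigma tau) = diss (G'edge sigma tau)
    & diss (G'edge sigma tau) = 2 * l].
Proof.
have Girr : irreflexive (Gedge sigma).
  by move=> x; case: x => i [[] j]; rewrite /Gedge /matchE /= !eqxx.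
have G'irr : irreflexive (G'edge sigma tau).
  by move=> x; case: x => i [[] j]; rewrite /G'edge Girr /matchE /= ?andbF.
have Gsym : symmetric (Gedge sigma).
  move=> x y; rewrite /Gedge eq_sym (eq_sym x); congr orb; exact: orbC.
have G'sym : symmetric (G'edge sigma tau).
  move=> x y; rewrite /G'edge Gsym; congr orb; exact: orbC.
have Gclq : forall x y : gvert l k, x.1 == y.1 -> x != y -> Gedge sigma x y.
  by move=> x y h1 h2; rewrite /Gedge h1 h2.
have G'clq : forall x y : gvert l k, x.1 == y.1 -> x != y -> G'edge sigma tau x y.
  by move=> x y h1 h2; rewrite /G'edge Gclq.
have Gcross : forall x y : gvert l k, Gedge sigma x y -> ~~ x.2.1 -> ~~ y.2.1 -> x.1 == y.1.
  move=> x y; case: x => i [[] j]; case: y => i' [[] j'] //=; rewrite /Gedge /matchE /= ?andbF ?orbF.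
  by case/andP.
have G'cross : forall x y : gvert l k, G'edge sigma tau x y -> ~~ x.2.1 -> ~~ y.2.1 -> x.1 == y.1.
  move=> x y; case: x => i [[] j]; case: y => i' [[] j'] //=; rewrite /G'edge /Gedge /matchE /= ?andbF ?orbF.
  by case/andP.
have Gstep : forall (i : 'I_l) (j : 'I_k), Gedge sigma (i, (true, j)) (ordS i, (false, sigma i j)).
  by move=> i j; rewrite /Gedge /matchE /= !eqxx orbT.
have G'step : forall (i : 'I_l) (j : 'I_k), G'edge sigma tau (i, (true, j)) (ordS i, (false, sigma i j)).
  by move=> i j; rewrite /G'edge Gstep.
have nbne : forall v, nb tau v != nb sigma v.
  move=> v; case: v => i [[] j]; rewrite /nb /= !xpair_eqE /=; first by rewrite (negbTE (hdisj _ _)) andbF.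
  rewrite eqxx /=; apply/negP => /eqP h.
  have := hdisj (ord_pred i) ((sigma (ord_pred i))^-1%g j).
  by rewrite [sigma _ _]permKV -h permKV eqxx.
split; split.
- by split.
- move=> v; rewrite Gset cardsU1 (nb_notin hk hl) (card_C v); lia.
- exact: (conn hk hl Gclq Gsym Gstep).
- by rewrite (alpha_eq hk Girr Gclq Gcross) (diss_eq hk hl Girr Gclq Gcross).
- exact: (diss_eq hk hl Girr Gclq Gcross).
- by split.
- move=> v; rewrite G'set cardsU1 in_setU1 negb_or nbne (nb_notin hk hl) cardsU1 (nb_notin hk hl) (card_C v) /=; lia.
- exact: (conn hk hl G'clq G'sym G'step).
- by rewrite (alpha_eq hk G'irr G'clq G'cross) (diss_eq hk hl G'irr G'clq G'cross).
- exact: (diss_eq hk hl G'irr G'clq G'cross).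
Qed.
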